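(* Let $n\geq 3$, let $\mathrm{D}_{2n}=\langle a,b\mid a^n=b^2=1,\ b^{-1}ab=a^{-1}\rangle$, let $\Gamma=\mathrm{Cay}(\mathrm{D}_{2n},S)$ be a Cayley digraph of $\mathrm{D}_{2n}$, and let $A=\mathrm{Aut}(\Gamma)$. Suppose $A$ has a subgroup $R$ which is regular on the vertex set of $\Gamma$ and isomorphic to $\mathrm{D}_{2n}$. Then $R$ and $R(\mathrm{D}_{2n})$ are conjugate in $A$ if and only if the unique cyclic subgroup of order $n$ in $R$ is conjugate in $A$ to $\langle R(a)\rangle$.
   Context: For a group $G$ and a subset $S\subseteq G$ with $1\notin S$, the Cayley digraph $\mathrm{Cay}(G,S)$ has vertex set $G$ and arc set $\{(g,sg)\mid g\in G,\ s\in S\}$. For $g\in G$, $R(g)$ denotes the right multiplication $x\mapsto xg$ on $G$, which is an automorphism of $\mathrm{Cay}(G,S)$; $R(G)=\{R(g)\mid g\in G\}$ is the right regular representation. A subgroup of $\mathrm{Aut}(\Gamma)$ is regular if it acts transitively on the vertices with trivial vertex stabilizers. *)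

(* Defs.v *)
From mathcomp Require Import all_boot all_fingroup all_solvable.
Set Implicit Arguments. Unset Strict Implicit. Unset Printing Implicit Defensive.
Local Open Scope group_scope.

Section Cayley.
Variable gT : finGroupType.

Definition cay_arc (S : {set gT}) (x y : gT) : bool := y * x^-1 \in S.

Definition cay_aut (S : {set gT}) : {set {perm gT}} :=
  [set s : {perm gT} | [forall x, forall y, cay_arc S (s x) (s y) == cay_arc S x y]].

Definition rmul (g : gT) : {perm gT} := perm (mulIg g).

Definition rreg : {set {perm gT}} := [set rmul g | g in [set: gT]].

Definition regular (H : {set {perm gT}}) : Prop :=
  [transitive H, on [set: gT] | 'P] /\ forall x : gT, 'C_H[x | 'P] = 1.

Definition conj_in (A X Y : {set {perm gT}}) : Prop :=
  exists2 s, s \in A & X :^ s = Y.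
End Cayley.

(* Main.v *)
Require Import Defs.
From mathcomp Require Import all_boot all_fingroup all_solvable.
Local Open Scope group_scope.
Set Implicit Arguments. Unset Strict Implicit.

Lemma conj_comm (gT : finGroupType) (x y : gT) : commute x y -> x ^ y = x.
Proof. by move=> Hc; rewrite conjgE Hc mulKg. Qed.

Section Dihedral.
Variables (n : nat) (gT : finGroupType) (a b : gT).
Hypotheses (Hn : 3 <= n) (Ha : a ^+ n = 1) (Hb : b ^+ 2 = 1)
  (Hab : b^-1 * a * b = a^-1)
  (Hgen : <<[set a; b]>> = [set: gT]) (Hord : #|[set: gT]| = (2 * n)%N).

Lemma binv : b^-1 = b.
Proof. by apply/eqP; rewrite eq_invg_mul -expg2 Hb. Qed.

Lemma conjab : a ^ b = a^-1.
Proof. by rewrite conjgE mulgA Hab. Qed.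

Lemma conjabX i : (a ^+ i) ^ b = (a^-1) ^+ i.
Proof. by rewrite conjXg conjab. Qed.

Lemma setT_sub : [set: gT] \subset <[b]> * <[a]>.
Proof.
have nab : <[b]> \subset 'N(<[a]>).
  by rewrite cycle_subG inE -cycleJ conjab cycleV.
rewrite -norm_joinEl // -Hgen gen_subG; apply/subsetP => x /set2P [->|->].
  by apply: (subsetP (joing_subr _ _)); exact: cycle_id.
by apply: (subsetP (joing_subl _ _)); exact: cycle_id.
Qed.

Lemma decomp x : exists i, x = a ^+ i \/ x = b * a ^+ i.
Proof.
have /mulsgP [z y Hz Hy ->] := subsetP setT_sub x (in_setT x).
case/cycleP: Hz => k ->; case/cycleP: Hy => i ->.
exists i; rewrite -(expg_mod _ Hb) modn2; case: (odd k) => /=.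
  by right; rewrite expg1.
by left; rewrite expg0 mul1g.
Qed.

Lemma order_a : #[a] = n.
Proof.
have h1 : #[a] <= n.
  apply: dvdn_leq; first by apply: leq_trans Hn.
  by rewrite order_dvdn Ha.
have h2 : #[b] <= 2 by apply: dvdn_leq => //; rewrite order_dvdn Hb.
have h3 := subset_leq_card setT_sub.
have h4 := mul_cardG <[b]> <[a]>.
have h5 : 0 < #|<[b]> :&: <[a]>| by rewrite cardG_gt0.
rewrite -!orderE in h4.
have h6 : #|<[b]> * <[a]>| <= #[b] * #[a].
  by rewrite h4; apply: leq_pmulr.
have h7 : #[b] * #[a] <= 2 * #[a] by rewrite leq_mul2r h2 orbT.
rewrite Hord in h3.
apply/eqP; rewrite eqn_leq h1 /=.
rewrite -(leq_pmul2l (isT : 0 < 2)).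
exact: leq_trans h3 (leq_trans h6 h7).
Qed.

Lemma b_notin : b \notin <[a]>.
Proof.
apply/negP => Hb'.
have : [set: gT] \subset <[a]>.
  apply/subsetP => x _; have [i [->|->]] := decomp x; first exact: mem_cycle.
  by rewrite groupM // mem_cycle.
move/subset_leq_card; rewrite Hord -orderE order_a.
by rewrite -{2}(mul1n n) leq_pmul2r //; apply: leq_trans Hn.
Qed.

Lemma outside x : x \notin <[a]> -> exists i, x = b * a ^+ i.
Proof.
have [i [->|->]] := decomp x; last by exists i.
by rewrite mem_cycle.
Qed.

Lemma out_inv x : x \notin <[a]> -> x * x = 1.
Proof.
case/outside => i ->.
by rewrite mulgA -{1}binv -(mulgA b^-1) -conjgE conjabX expVgn mulVg.
Qed.

Lemma out_conj x y : x \notin <[a]> -> y \in <[a]> -> y ^ x = y^-1.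
Proof.
case/outside => i -> /cycleP [j ->].
rewrite conjgM conjabX conj_comm ?expVgn //. idtac.
by rewrite -expVgn; apply: commuteX2; apply/commute_sym/commuteV/commute_refl.
Qed.

Lemma ord_n_in h : #[h] = n -> h \in <[a]>.
Proof.
move=> Hh; apply/negPn/negP => /out_inv Hhh.
have : #[h] %| 2 by rewrite order_dvdn expg2 Hhh.
move/dvdn_leq => /(_ isT); rewrite Hh => H2.
by have := leq_trans Hn H2.
Qed.

Lemma cyc_eq h : #[h] = n -> <[h]> = <[a]>.
Proof.
move=> Hh; apply/eqP. rewrite eqEcard cycle_subG (@ord_n_in h Hh) /=.
by rewrite -!orderE Hh order_a.
Qed.

End Dihedral.

Section Rmul.
Variable gT : finGroupType.
Lemma rmulE (g x : gT) : rmul g x = x * g.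
Proof. by rewrite /rmul permE. Qed.
Lemma rmulM (g h : gT) : rmul (g * h) = rmul g * rmul h.
Proof. by apply/permP => x; rewrite permM !rmulE mulgA. Qed.
Lemma rmul1 : rmul (1 : gT) = 1.
Proof. by apply/permP => x; rewrite rmulE mulg1 perm1. Qed.
Lemma rmulX (g : gT) k : rmul (g ^+ k) = rmul g ^+ k.
Proof.
elim: k => [|k IH]; first by rewrite !expg0 rmul1.
by rewrite !expgS rmulM IH.
Qed.
Lemma rmul_inj : injective (@rmul gT).
Proof. by move=> x y E; have := rmulE x 1; rewrite E rmulE !mul1g. Qed.
Lemma order_rmul (g : gT) : #[rmul g] = #[g].
Proof.
apply/eqP; rewrite eqn_dvd !order_dvdn -rmulX expg_order rmul1 eqxx /=.
apply/eqP/rmul_inj; rewrite rmul1 rmulX; exact: expg_order.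
Qed.
End Rmul.

Lemma rmulV (gT : finGroupType) (g : gT) : (rmul g)^-1 = rmul g^-1.
Proof. by apply/eqP; rewrite eq_invg_mul -rmulM mulgV rmul1. Qed.

Theorem lemma4p1 (n : nat) (gT : finGroupType) (a b : gT)
  (Hn : 3 <= n)
  (Ha : a ^+ n = 1) (Hb : b ^+ 2 = 1) (Hab : b^-1 * a * b = a^-1)
  (Hgen : <<[set a; b]>> = [set: gT]) (Hord : #|[set: gT]| = (2 * n)%N)
  (S : {set gT}) (HS : 1 \notin S)
  (R : {group {perm gT}})
  (HRA : R \subset cay_aut S) (HRreg : regular R)
  (HRiso : R \isog [set: gT])
  (C : {group {perm gT}}) (HCR : C \subset R) (HCcyc : cyclic C)
  (HCord : #|C| = n) :
  conj_in (cay_aut S) R (rreg gT) <->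
  conj_in (cay_aut S) C <[rmul a]>.
Proof.
have cardR := card_isog HRiso.
case/cyclicP: HCcyc => c Cc.
have cR : c \in R by apply: (subsetP HCR); rewrite Cc cycle_id.
have oc : #[c] = n by rewrite orderE -Cc HCord.
have oa := order_a Hn Ha Hb Hab Hgen Hord.
split.
  move=> [s sA Hs]; exists s => //.
  have : c ^ s \in rreg gT by rewrite -Hs memJ_conjg.
  case/imsetP => g _ Eg.
  have og : #[rmul g] = n by rewrite -Eg orderJ.
  have og' : #[g] = n by rewrite -order_rmul.
  have : g \in <[a]> by rewrite -(cyc_eq Hn Ha Hb Hab Hgen Hord og') cycle_id.
  case/cycleP => i Ei.
  rewrite Cc -cycleJ Eg; apply/eqP; rewrite eqEcard cycle_subG Ei rmulX mem_cycle /=.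
  by rewrite -!orderE -rmulX -Ei og order_rmul oa.
move=> [s sA Hs]; exists s => //.
case/isogP: HRiso => f injf imf.
have ofc : #[f c] = n by rewrite order_injm.
have Efc : <[f c]> = <[a]> := cyc_eq Hn Ha Hb Hab Hgen Hord ofc.
have key1 : forall t, t \in R -> t \notin C -> f t \notin <[a]>.
  move=> t tR; apply: contra; rewrite -Efc => /cycleP [k Ek].
  rewrite Cc; apply/cycleP; exists k; apply: (injmP injf) => //.
    by rewrite groupX.
  by rewrite morphX.
have key2 : forall t, t \in R -> t \notin C -> t * t = 1.
  move=> t tR tC; apply: (injmP injf); rewrite ?groupM ?morphM ?morph1 //.
  exact: (out_inv Hb Hab Hgen (key1 t tR tC)).
have key3 : forall t x, t \in R -> t \notin C -> x \in C -> x ^ t = x^-1.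
  move=> t x tR tC xC.
  have xR : x \in R by apply: (subsetP HCR).
  apply: (injmP injf); rewrite ?groupJ ?groupV ?morphJ ?morphV //.
  apply: (out_conj Hb Hab Hgen (key1 t tR tC)).
  move: xC; rewrite -Efc Cc => /cycleP [k ->]; by rewrite morphX // mem_cycle.
have [t tR Et] := atransP2 HRreg.1 (in_setT (s^-1 1)) (in_setT (s^-1 b)).
rewrite /= apermE in Et.
set tau := t ^ s.
have tau1 : tau 1 = b by rewrite /tau conjgE !permM -Et permKV.
have tC : t \notin C.
  apply/negP => tC.
  have : tau \in <[rmul a]> by rewrite -Hs memJ_conjg.
  case/cycleP => i Ei.
  have := tau1; rewrite Ei -rmulX rmulE mul1g => Eb.
  by have := b_notin Hn Ha Hb Hab Hgen Hord; rewrite -Eb mem_cycle.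
have tt : tau * tau = 1 by rewrite -conjMg key2 // conj1g.
have ra : rmul a ^ tau = (rmul a)^-1.
  have cC : rmul a ^ s^-1 \in C by rewrite -mem_conjg Hs cycle_id.
  have E1 : rmul a = (rmul a ^ s^-1) ^ s by rewrite conjgKV.
  by rewrite {1}E1 /tau -conjJg (key3 t _ tR tC cC) conjVg -E1.
have tau_a : forall y, tau (y * a) = tau y * a^-1.
  move=> y.
  have E : rmul a * tau = tau * rmul a^-1.
    by rewrite -[rmul a * tau](mulKVg tau) -conjgE ra rmulV.
  by have := congr1 (fun p : {perm gT} => p y) E; rewrite /= !permM !rmulE.
have tau_ai : forall i y, tau (y * a ^+ i) = tau y * (a^-1) ^+ i.
  elim=> [|i IH] y; first by rewrite !expg0 !mulg1.
  by rewrite !expgS mulgA IH tau_a mulgA.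
have taub : tau b = 1 by rewrite -tau1 -permM tt perm1.
have Etau : tau = rmul b.
  apply/permP => x; rewrite rmulE.
  have [i [->|->]] := decomp Hb Hab Hgen x.
    by rewrite -{1}(mul1g (a ^+ i)) tau_ai tau1 -(conjabX Hab) conjgE mulKVg.
  by rewrite tau_ai taub mul1g -(conjabX Hab) conjgE (binv Hb) mulgA.
have raR : rmul a \in R :^ s.
  have : C :^ s \subset R :^ s by rewrite conjSg.
  by move/subsetP; apply; rewrite Hs cycle_id.
have rbR : rmul b \in R :^ s by rewrite -Etau memJ_conjg.
apply/eqP; rewrite eq_sym eqEcard; apply/andP; split.
  apply/subsetP => p /imsetP [x _ ->].
  have [i [->|->]] := decomp Hb Hab Hgen x.
    by rewrite rmulX groupX.
  by rewrite rmulM rmulX groupM ?groupX.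
by rewrite cardJg cardR /rreg card_imset //; exact: rmul_inj.
Qed.
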